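(* For every integer $n\geq 5$, $AR(n,C_3\cup P_2)=\max\{n+1,\,7\}$, where $C_3\cup P_2$ is the vertex-disjoint union of a triangle and a single edge. *)

(* Defs.v *)
From mathcomp Require Import all_boot.
Set Implicit Arguments. Unset Strict Implicit. Unset Printing Implicit Defensive.

(* An edge-colouring of the complete graph K_n (vertex set 'I_n) using exactly
   k colours: c u v is the colour of the edge uv (only u != v is meaningful),
   c is symmetric, and every colour of 'I_k is used on some edge. *)
Definition edge_coloring (n k : nat) (c : 'I_n -> 'I_n -> 'I_k) : Prop :=
  (forall u v, c u v = c v u) /\
  (forall i : 'I_k, exists u v : 'I_n, u != v /\ c u v = i).

Definition has_rainbow_C3P2 (n k : nat) (c : 'I_n -> 'I_n -> 'I_k) : Prop :=
  exists a b x d e : 'I_n,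
    uniq [:: a; b; x; d; e] /\ uniq [:: c a b; c b x; c x a; c d e].

(* AR(n, C_3 \cup P_2) = m  iff  m - 1 is the maximum number of colours in an
   edge-colouring of K_n with no rainbow C_3 \cup P_2 (so m is the least number
   of colours forcing a rainbow copy). *)
Definition AR_C3P2_is (n m : nat) : Prop :=
  (exists k (c : 'I_n -> 'I_n -> 'I_k),
      k.+1 = m /\ edge_coloring c /\ ~ has_rainbow_C3P2 c) /\
  (forall k (c : 'I_n -> 'I_n -> 'I_k),
      edge_coloring c -> ~ has_rainbow_C3P2 c -> k.+1 <= m).

(* Main.v *)
Require Import Defs.
From mathcomp Require Import all_boot zify.
Set Implicit Arguments. Unset Strict Implicit. Unset Printing Implicit Defensive.

Section Comp.
Variable m : nat.
Definition E := [seq (i, j) | i <- iota 0 m, j <- iota i.+1 (m - i.+1)].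
Definition eidx i j := index (minn i j, maxn i j) E.
Definition quad (t : seq nat) := [:: eidx (nth 0 t 0) (nth 0 t 1); eidx (nth 0 t 1) (nth 0 t 2);
   eidx (nth 0 t 2) (nth 0 t 0); eidx (nth 0 t 3) (nth 0 t 4)].
Fixpoint tup k := if k is k'.+1 then [seq x :: l | x <- iota 0 m, l <- tup k'] else [:: [::]].
Definition CF := undup [seq sort leq (quad t) | t <- tup 5 & uniq t].
Definition maxl (cf : seq nat) := foldr maxn 0 cf.
Definition Tab := [seq [seq cf <- CF | maxl cf == i] | i <- iota 0 (size E)].

Lemma mem_E i j : i < j -> j < m -> (i, j) \in E.
Proof.
move=> hij hjm; rewrite /E.
apply: (@allpairs_f_dep _ (fun _ => nat) _ (fun i j => (i,j))); rewrite !mem_iota /=; lia.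
Qed.

Lemma mem_tup k t : t \in tup k -> size t = k /\ all (fun x => x < m) t.
Proof.
elim: k t => [|k IH] t /=; first by rewrite inE => /eqP ->.
case/allpairsP => [[x l] [/= hx hl ->]]; have [hs ha] := IH _ hl.
by rewrite /= hs ha andbT; split => //; move: hx; rewrite mem_iota.
Qed.

Lemma maxl_ge cf j : j \in cf -> j <= maxl cf.
Proof.
elim: cf => [|x cf IH] //=; rewrite inE => /orP [/eqP ->|/IH]; lia.
Qed.
End Comp.

Section S2.
Variable (K : nat) (Tb : seq (seq (seq nat))) (forb : seq bool).
Definition okl (p : seq nat) := all (fun cf => ~~ uniq [seq nth 0 p i | i <- cf]) (nth [::] Tb (size p).-1).
Fixpoint hasl (f : nat -> bool) (s : seq nat) := if s is x :: s' then if f x then true else hasl f s' else false.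
Lemma haslE f s : hasl f s = has f s.
Proof. by elim: s => //= x s ->; case: (f x). Qed.
Fixpoint search (fuel : nat) (p roots : seq nat) : bool :=
 match fuel with
 | 0 => K <= size roots
 | f.+1 => if (K <= size roots + fuel) then hasl (fun l => if (l == 0) && nth false forb (size p) then false else let p' := rcons p l in if okl p' then search f p' (if l == size p then l :: roots else roots) else false) (size p :: roots) else false
 end.
Lemma searchS f p r : search f.+1 p r = (K <= size r + f.+1) && has (fun l => ~~ ((l == 0) && nth false forb (size p)) && okl (rcons p l) && search f (rcons p l) (if l == size p then l :: r else r)) (size p :: r).
Proof.
have hg : forall l, (if (l == 0) && nth false forb (size p) then false else (if okl (rcons p l) then search f (rcons p l) (if l == size p then l :: r else r) else false)) = ~~ ((l == 0) && nth false forb (size p)) && okl (rcons p l) && search f (rcons p l) (if l == size p then l :: r else r).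
  by move=> l; case: (_ && _); case: (okl _).
rewrite [LHS]/= haslE; case: (K <= _) => //.
rewrite [has _ (_ :: _)]/= -hg; case: ifP => // _; apply: eq_has => l; by rewrite hg.
Qed.
End S2.

Section Sound.
Variables (m K : nat) (L : seq nat) (forb : seq bool).
Let N := size (E m).
Hypothesis hsize : size L = N.
Hypothesis hroot : forall i, i < N -> nth 0 L i = i \/ (nth 0 L i < i /\ nth 0 L (nth 0 L i) = nth 0 L i).
Hypothesis hnr : forall cf, cf \in CF m -> maxl cf < N -> ~~ uniq [seq nth 0 L i | i <- cf].
Hypothesis hK : K <= size (undup L).
Hypothesis hforb : forall i, i < N -> nth false forb i -> nth 0 L i != 0.

Fixpoint R i := if i is i'.+1 then (if nth 0 L i' == i' then i' :: R i' else R i') else [::].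

Lemma memR i x : (x \in R i) = (x < i) && (nth 0 L x == x).
Proof.
elim: i => [|i IH] /=; first by rewrite in_nil.
have e : forall x, x != i -> (x < i.+1) = (x < i).
  by move=> y hy; rewrite ltnS leq_eqVlt (negbTE hy).
case h: (nth 0 L i == i); rewrite ?inE IH;
  case: (eqVneq x i) => [->|hne] /=; rewrite ?ltnSn ?ltnn ?h ?e //.
Qed.

Lemma sizeR i d : size (R (i + d)) <= size (R i) + d.
Proof.
elim: d => [|d IH]; first by rewrite !addn0.
rewrite addnS /=; case: ifP => _ /=; lia.
Qed.

Lemma undupR : size (undup L) <= size (R N).
Proof.
apply: uniq_leq_size; first exact: undup_uniq.
move=> x; rewrite mem_undup => /(nthP 0) [j hj <-].
rewrite hsize in hj; rewrite memR.
case: (hroot hj) => [e|[h1 h2]]; first by rewrite e hj e eqxx.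
by rewrite h2 eqxx andbT (ltn_trans h1 hj).
Qed.

Lemma okl_take i : i < N -> okl (Tab m) (take i.+1 L).
Proof.
move=> hi; rewrite /okl size_takel ?hsize //= /Tab (nth_map 0) ?size_iota //.
rewrite nth_iota // add0n; apply/allP => cf; rewrite mem_filter => /andP [/eqP hm hcf].
have -> : [seq nth 0 (take i.+1 L) j | j <- cf] = [seq nth 0 L j | j <- cf].
  apply/eq_in_map => j hj; rewrite nth_take //; have := maxl_ge hj; lia.
by apply: hnr; rewrite // hm.
Qed.

Lemma search_inv d i : i + d = N -> search K (Tab m) forb d (take i L) (R i).
Proof.
elim: d i => [|d IH] i hid.
  rewrite /= addn0 in hid; rewrite hid; exact: leq_trans hK undupR.
have hi : i < N by lia.
have hKi : K <= size (R i) + d.+1.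
  apply: leq_trans hK _; apply: leq_trans undupR _; rewrite -hid; exact: sizeR.
rewrite searchS; apply/andP; split; first by [].
apply/hasP; exists (nth 0 L i).
  rewrite inE size_take hsize hi memR.
  by case: (hroot hi) => [->|[h1 h2]]; rewrite ?eqxx // h1 h2 eqxx orbT.
rewrite size_take hsize hi.
have -> : ~~ ((nth 0 L i == 0) && nth false forb i).
  by case hf: (nth false forb i); rewrite ?andbF ?andbT // hforb.
rewrite -take_nth ?hsize // okl_take //.
have -> : (if nth 0 L i == i then nth 0 L i :: R i else R i) = R i.+1.
  by rewrite /=; case: eqP => // ->.
by apply: IH; lia.
Qed.

Lemma search_true : search K (Tab m) forb N [::] [::].
Proof. by have := search_inv (add0n N); rewrite take0. Qed.
End Sound.

Section Transport.
Variables (m : nat) (T : eqType) (x0 : T) (Lc : seq T) (forb : seq bool).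
Hypothesis hsize : size Lc = size (E m).
Hypothesis hnr : forall cf, cf \in CF m -> ~~ uniq [seq nth x0 Lc i | i <- cf].
Hypothesis hforbc : forall i, i < size (E m) -> nth false forb i -> nth x0 Lc i != nth x0 Lc 0.
Hypothesis hsearch : search 7 (Tab m) forb (size (E m)) [::] [::] = false.

Lemma transport : size (undup Lc) <= 6.
Proof.
rewrite leqNgt; apply/negP => hK.
pose L := [seq index x Lc | x <- Lc].
have inj : {in Lc &, injective (index^~ Lc)} by exact: index_inj.
have hL i : i < size Lc -> nth 0 L i = index (nth x0 Lc i) Lc by move=> hi; rewrite (nth_map x0).
suff : search 7 (Tab m) forb (size (E m)) [::] [::] by rewrite hsearch.
apply: (@search_true m 7 L forb).
- by rewrite size_map.
- move=> i hi; rewrite -hsize in hi; rewrite hL //.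
  have hle := index_nth x0 hi.
  case: (ltngtP (index (nth x0 Lc i) Lc) i) => [hlt|hgt|->]; last by left.
  + right; split => //; rewrite hL; last by rewrite index_mem mem_nth.
    by rewrite nth_index // mem_nth.
  + lia.
- move=> cf hcf hmax; have := hnr hcf; apply: contra.
  have hall : all (fun i => i < size Lc) cf.
    by apply/allP => j hj; have := maxl_ge hj; rewrite hsize; lia.
  have -> : [seq nth 0 L i | i <- cf] = [seq index x Lc | x <- [seq nth x0 Lc i | i <- cf]].
    rewrite -map_comp; apply/eq_in_map => j hj; rewrite hL //; exact: (allP hall).
  rewrite map_inj_in_uniq //; move=> x y /mapP [a ha ->] /mapP [b hb ->]; apply: inj;
    apply: mem_nth; exact: (allP hall).
- apply: leq_trans hK _.
  have -> : size (undup Lc) = size [seq index x Lc | x <- undup Lc] by rewrite size_map.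
  apply: uniq_leq_size.
    rewrite map_inj_in_uniq ?undup_uniq // => x y; rewrite !mem_undup; exact: inj.
  move=> y /mapP [x hx ->]; rewrite mem_undup; apply: map_f; by rewrite -mem_undup.
- move=> i hi hf; have := hforbc hi hf; rewrite -hsize in hi; rewrite hL //.
  by case: (Lc) hi => [|h t] //= _; rewrite eq_sym; case: ifP.
Qed.
End Transport.

Lemma s5 : search 7 (Tab 5) [::] (size (E 5)) [::] [::] = false. Proof. vm_cast_no_check (erefl false). Qed.
Definition forb6 := [seq e.1 != 0 | e <- E 6].
Lemma s6 : search 7 (Tab 6) forb6 (size (E 6)) [::] [::] = false. Proof. vm_cast_no_check (erefl false). Qed.

Ltac dst := solve [ done | rewrite eq_sym; done ].

Lemma uniq5 (T : eqType) (a b x d e : T) :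
  a != b -> a != x -> a != d -> a != e -> b != x -> b != d -> b != e ->
  x != d -> x != e -> d != e -> uniq [:: a; b; x; d; e].
Proof.
move=> *; rewrite /= !inE !negb_or; repeat (apply/andP; split); dst.
Qed.

Lemma uniq4 (T : eqType) (a b x d : T) :
  a != b -> a != x -> a != d -> b != x -> b != d -> x != d -> uniq [:: a; b; x; d].
Proof.
move=> *; rewrite /= !inE !negb_or; repeat (apply/andP; split); dst.
Qed.

Section G.
Variables (n k : nat) (c : 'I_n -> 'I_n -> 'I_k).
Hypothesis hsym : forall u v, c u v = c v u.
Hypothesis hnr : ~ has_rainbow_C3P2 c.

Definition cols (S : {set 'I_n}) : {set 'I_k} :=
  [set i | [exists u, exists v, [&& u \in S, v \in S, u != v & c u v == i]]].

Lemma colsP (S : {set 'I_n}) i : reflect (exists u v, [/\ u \in S, v \in S, u != v & c u v = i]) (i \in cols S).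
Proof.
rewrite inE; apply: (iffP existsP) => [[u /existsP [v /and4P [hu hv huv /eqP e]]]|[u [v [hu hv huv e]]]].
  by exists u, v.
by exists u; apply/existsP; exists v; rewrite hu hv huv e eqxx.
Qed.

Lemma cols_mem (S : {set 'I_n}) u v : u \in S -> v \in S -> u != v -> c u v \in cols S.
Proof. by move=> hu hv huv; apply/colsP; exists u, v. Qed.

Definition priv (S : {set 'I_n}) a col := col \notin cols (S :\ a).

Lemma neq_priv (S : {set 'I_n}) a col u u' : priv S a col -> u \in S -> u' \in S -> u != a -> u' != a ->
  u != u' -> c u u' != col.
Proof.
move=> hp hu hu' hua hu'a huu'; apply: contraNneq hp => <-.
by apply: cols_mem; rewrite // in_setD1 ?hua ?hu'a.
Qed.

Lemma neq_cols (S : {set 'I_n}) a col col' : priv S a col -> col' \in cols (S :\ a) -> col' != col.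
Proof. by move=> hp h; apply: contraNneq hp => <-. Qed.

Lemma priv_edge (S : {set 'I_n}) v col : col \in cols S :\: cols (S :\ v) ->
  exists z, [/\ z \in S, z != v & c v z = col].
Proof.
case/setDP => /colsP [u [u' [hu hu' huu' e]]] hn.
case: (eqVneq u v) => [huv|huv].
  by exists u'; split => //; rewrite -huv // eq_sym.
case: (eqVneq u' v) => [hu'v|hu'v].
  by exists u; split => //; rewrite -hu'v hsym.
by case/negP: hn; rewrite -e; apply: cols_mem; rewrite // in_setD1 ?huv ?hu'v.
Qed.

Lemma two_priv (S : {set 'I_n}) v : 1 < #|cols S :\: cols (S :\ v)| ->
  exists x y, [/\ x \in S, y \in S, x != v, y != v &
     [/\ c v x != c v y, priv S v (c v x) & priv S v (c v y)]].
Proof.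
case/card_gt1P => al [be [ha hb hab]].
have [x [hx hxv ex]] := priv_edge ha.
have [y [hy hyv ey]] := priv_edge hb.
exists x, y; split => //; rewrite /priv ex ey; split => //.
  by move: ha => /setDP [].
by move: hb => /setDP [].
Qed.

Lemma L2a (S : {set 'I_n}) w z1 z2 w' z3 :
  w != z1 -> w != z2 -> w != w' -> w != z3 -> z1 != z2 -> z1 != w' -> z1 != z3 ->
  z2 != w' -> z2 != z3 -> w' != z3 ->
  w \in S -> z1 \in S -> z2 \in S -> w' \in S -> z3 \in S ->
  priv S w (c w z1) -> priv S w (c w z2) -> c w z1 != c w z2 -> priv S w' (c w' z3) ->
  has_rainbow_C3P2 c.
Proof.
move=> d1 d2 d3 d4 d5 d6 d7 d8 d9 d10 h1 h2 h3 h4 h5 p1 p2 p12 p3.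
exists w, z1, z2, w', z3; split; first exact: uniq5.
rewrite [c z2 w]hsym; apply: uniq4 => //.
- by rewrite eq_sym; apply: (neq_priv p1); dst.
- by apply: (neq_priv p3); dst.
- by apply: (neq_priv p2); dst.
- by apply: (neq_priv p3); dst.
- by apply: (neq_priv p3); dst.
Qed.

Lemma L2b (S : {set 'I_n}) w z w' v t :
  w != z -> w != w' -> w != v -> w != t -> z != w' -> z != v -> z != t ->
  w' != v -> w' != t -> v != t ->
  w \in S -> z \in S -> w' \in S -> v \in S -> t \in S ->
  priv S w (c w z) -> priv S w' (c w' z) -> priv S v (c v t) ->
  c w w' \in cols (S :\ w) -> c w w' \in cols (S :\ w') ->
  has_rainbow_C3P2 c.
Proof.
move=> d1 d2 d3 d4 d5 d6 d7 d8 d9 d10 h1 h2 h3 h4 h5 p1 p2 p3 g1 g2.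
exists w, z, w', v, t; split; first exact: uniq5.
rewrite [c z w']hsym [c w' w]hsym; apply: uniq4.
- by apply: (neq_priv p2); dst.
- by rewrite eq_sym; apply: (neq_cols p1).
- by apply: (neq_priv p3); dst.
- by rewrite eq_sym; apply: (neq_cols p2).
- by rewrite -[c w' z]hsym; apply: (neq_priv p3); dst.
- by apply: (neq_priv p3); dst.
Qed.


Lemma P2main (S : {set 'I_n}) : 5 <= #|S| ->
  (forall v, v \in S -> 1 < #|cols S :\: cols (S :\ v)|) -> has_rainbow_C3P2 c.
Proof.
move=> hS hall.
have [v hv] : exists v, v \in S by apply/card_gt0P; lia.
have [x [y [hx hy hxv hyv [hcxy pvx pvy]]]] := two_priv (hall v hv).
have hxy : x != y by apply: contraNneq hcxy => ->.
pose W := S :\ v :\ x :\ y.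
have memW u : u \in W = [&& u != y, u != x, u != v & u \in S] by rewrite !in_setD1.
have hW : 1 < #|W|.
  have := cardsD1 v S; have := cardsD1 x (S :\ v); have := cardsD1 y (S :\ v :\ x).
  rewrite -/W; move: hS; case: (v \in S); case: (x \in S :\ v); case: (y \in S :\ v :\ x) => /=; lia.
case: (boolP [exists d, exists e, [&& d \in W, e \in W, d != e & c d e != c x y]]).
  case/existsP => d /existsP [e /and4P [hd he hde hc]].
  move: hd he; rewrite !memW => /and4P [hdy hdx hdv hdS] /and4P [hey hex hev heS].
  exists v, x, y, d, e; split; first by apply: uniq5; dst.
  rewrite [c y v]hsym; apply: uniq4 => //.
  - by rewrite eq_sym; apply: (neq_priv pvx); dst.
  - by rewrite eq_sym; apply: (neq_priv pvx); dst.
  - by apply: (neq_priv pvy); dst.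
  - by rewrite eq_sym.
  - by rewrite eq_sym; apply: (neq_priv pvy); dst.
rewrite negb_exists => /forallP H.
have HW d e : d \in W -> e \in W -> d != e -> c d e = c x y.
  move=> hd he hde; have := H d; rewrite negb_exists => /forallP /(_ e).
  by rewrite hd he hde /= negbK => /eqP.
have [w [w' [hw hw' hww']]] := card_gt1P hW.
have hwS : w \in S by move: hw; rewrite memW => /and4P [].
have hw'S : w' \in S by move: hw'; rewrite memW => /and4P [].
have notW u z : u \in W -> [|| z == v, z == x | z == y] -> z != u.
  rewrite memW => /and4P [h1 h2 h3 _] /or3P [] /eqP ->; dst.
have loc u z : u \in W -> z \in S -> z != u -> priv S u (c u z) -> [|| z == v, z == x | z == y].
  move=> hu hz hzu hp; apply/negPn/negP; rewrite !negb_or => /and3P [h1 h2 h3].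
  have hzW : z \in W by rewrite memW h1 h2 h3 hz.
  have huz : u != z by rewrite eq_sym.
  have e := HW u z hu hzW huz.
  move: hu; rewrite memW => /and4P [huy hux huv huS].
  have hxu : x != u by rewrite eq_sym.
  have hyu : y != u by rewrite eq_sym.
  by case/negP: (neq_priv hp hx hy hxu hyu hxy); rewrite e.
have gS u : u \in W -> c x y \in cols (S :\ u).
  rewrite memW => /and4P [huy hux _ _]; apply: cols_mem => //; rewrite in_setD1 ?hx ?hy andbT; dst.
have [z1 [z2 [hz1 hz2 hz1w hz2w [hc12 p1 p2]]]] := two_priv (hall w hwS).
have [z1' [z2' [hz1' hz2' hz1w' hz2w' [hc12' p1' p2']]]] := two_priv (hall w' hw'S).
have l1 := loc _ _ hw hz1 hz1w p1.
have l2 := loc _ _ hw hz2 hz2w p2.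
have l1' := loc _ _ hw' hz1' hz1w' p1'.
have l2' := loc _ _ hw' hz2' hz2w' p2'.
have hz12 : z1 != z2 by apply: contraNneq hc12 => ->.
have hz12' : z1' != z2' by apply: contraNneq hc12' => ->.
case: (boolP (z1' \in [:: z1; z2])) => i1; last first.
  move: i1; rewrite !inE negb_or => /andP [i1 i2].
  apply: (@L2a S w z1 z2 w' z1') => //; try dst; try (by apply: notW);
    by rewrite eq_sym; apply: notW.
case: (boolP (z2' \in [:: z1; z2])) => i2; last first.
  move: i2; rewrite !inE negb_or => /andP [i2 i3].
  apply: (@L2a S w z1 z2 w' z2') => //; try dst; try (by apply: notW);
    by rewrite eq_sym; apply: notW.
have [q1 q2] : priv S w' (c w' z1) /\ priv S w' (c w' z2).
  move: i1 i2; rewrite !inE => /orP [] /eqP e1 /orP [] /eqP e2; subst;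
    rewrite ?eqxx in hz12'; by [].
have fin z : z \in S -> z != v -> [|| z == v, z == x | z == y] ->
    priv S w (c w z) -> priv S w' (c w' z) -> has_rainbow_C3P2 c.
  move=> hz hzv /or3P [/eqP e|/eqP e|/eqP e] pz pz'; first by rewrite e eqxx in hzv.
    have hwz := notW w z hw ltac:(by rewrite e eqxx orbT).
    have hw'z := notW w' z hw' ltac:(by rewrite e eqxx orbT).
    have hwv := notW w v hw ltac:(by rewrite eqxx).
    have hw'v := notW w' v hw' ltac:(by rewrite eqxx).
    have hwy := notW w y hw ltac:(by rewrite eqxx !orbT).
    have hw'y := notW w' y hw' ltac:(by rewrite eqxx !orbT).
    subst z.
    apply: (@L2b S w x w' v y) => //; try dst; try (by rewrite HW ?gS).
  have hwz := notW w z hw ltac:(by rewrite e eqxx !orbT).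
  have hw'z := notW w' z hw' ltac:(by rewrite e eqxx !orbT).
  have hwv := notW w v hw ltac:(by rewrite eqxx).
  have hw'v := notW w' v hw' ltac:(by rewrite eqxx).
  have hwx := notW w x hw ltac:(by rewrite eqxx orbT).
  have hw'x := notW w' x hw' ltac:(by rewrite eqxx orbT).
  subst z.
  apply: (@L2b S w y w' v x) => //; try dst; try (by rewrite HW ?gS).
case: (eqVneq z1 v) => [e|hz1v].
  apply: (fin z2) => //; by rewrite -e eq_sym.
exact: (fin z1).
Qed.

Lemma small_gen (S : {set 'I_n}) m forb (s : seq 'I_n) (v0 : 'I_n) :
  uniq s -> size s = m -> S =i s ->
  (forall i, i < size (E m) -> nth false forb i ->
     c (nth v0 s (nth (0,0) (E m) i).1) (nth v0 s (nth (0,0) (E m) i).2)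
     != c (nth v0 s (nth (0,0) (E m) 0).1) (nth v0 s (nth (0,0) (E m) 0).2)) ->
  search 7 (Tab m) forb (size (E m)) [::] [::] = false -> #|cols S| <= 6.
Proof.
move=> us hs hSs hforb hsearch.
have mem_enum : forall u, (u \in s) = (u \in S) by move=> u; rewrite hSs.
pose f i j := c (nth v0 s i) (nth v0 s j).
have fsym i j : f i j = f j i by rewrite /f hsym.
pose Lc := [seq f e.1 e.2 | e <- E m].
have hmem i j : i < m -> j < m -> i != j -> (minn i j, maxn i j) \in E m.
  move=> hi hj hij; rewrite /minn /maxn; case: ltnP => h; apply: mem_E => //.
  by rewrite ltn_neqAle h andbT eq_sym.
have nthL i j : i < m -> j < m -> i != j -> nth (c v0 v0) Lc (eidx m i j) = f i j.
  move=> hi hj hij; rewrite /eidx (nth_map (0,0)); last by rewrite index_mem hmem.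
  rewrite nth_index ?hmem //= /minn /maxn; case: ltnP => // _; exact: fsym.
apply: (leq_trans _ (transport (x0 := c v0 v0) (Lc := Lc) _ _ _ hsearch)).
- apply: leq_trans (card_size (undup Lc)); apply: subset_leq_card.
  apply/subsetP => col /colsP [u [u' [hu hu' huu' <-]]].
  have hi : index u s < m by rewrite -hs index_mem mem_enum.
  have hj : index u' s < m by rewrite -hs index_mem mem_enum.
  have hij : index u s != index u' s.
    apply: contraNneq huu' => e.
    by rewrite -(nth_index v0 (s := s) (x := u)) ?mem_enum // e nth_index ?mem_enum.
  have -> : c u u' = f (index u s) (index u' s) by rewrite /f !nth_index ?mem_enum.
  rewrite /= mem_undup -nthL //; apply: mem_nth; rewrite size_map /eidx index_mem; exact: hmem.
- by rewrite size_map.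
- move=> cf; rewrite /CF mem_undup => /mapP [t]; rewrite mem_filter => /andP [ut tt] ->.
  have [st hat] := mem_tup tt.
  have hp : perm_eq (sort leq (quad m t)) (quad m t) by rewrite perm_sort.
  rewrite (perm_uniq (perm_map _ hp)).
  clear tt hp; case: t st ut hat => [|a [|b [|x [|d [|e [|? ?]]]]]] // _ ut hat.
  have hab : a != b by apply: contraTneq ut => ->; rewrite /= !inE eqxx /= ?orbT ?andbF.
  have hbx : b != x by apply: contraTneq ut => ->; rewrite /= !inE eqxx /= ?orbT ?andbF.
  have hxa : x != a by apply: contraTneq ut => ->; rewrite /= !inE eqxx /= ?orbT ?andbF.
  have hde : d != e by apply: contraTneq ut => ->; rewrite /= !inE eqxx /= ?orbT ?andbF.
  have hall5 := hat.
  move: hat => /= /and5P [ha hb hx hd /andP [he _]].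
  rewrite !nthL //.
  apply/negP => U; apply: hnr.
  exists (nth v0 s a), (nth v0 s b), (nth v0 s x), (nth v0 s d), (nth v0 s e); split => //.
  have -> : [:: nth v0 s a; nth v0 s b; nth v0 s x; nth v0 s d; nth v0 s e] =
    [seq nth v0 s i | i <- [:: a; b; x; d; e]] by [].
  rewrite map_inj_in_uniq // => i j hi hj /eqP; rewrite nth_uniq ?hs; first by move/eqP.
  - exact: (allP hall5).
  - exact: (allP hall5).
  - by [].
- move=> i hi hf; have h0 : 0 < size (E m) by apply: leq_ltn_trans hi.
  rewrite /Lc !(nth_map (0,0)) //; exact: hforb.
Qed.


Lemma small5 (S : {set 'I_n}) : #|S| = 5 -> #|cols S| <= 6.
Proof.
move=> hS; have [v0 _] : exists v0, v0 \in S by apply/card_gt0P; rewrite hS.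
apply: (@small_gen S 5 [::] (enum S) v0 (enum_uniq _) _ _ _ s5).
- by rewrite -cardE.
- by move=> u; rewrite mem_enum.
- by move=> i; rewrite nth_nil.
Qed.

Lemma small6 (S : {set 'I_n}) v0 z : #|S| = 6 -> v0 \in S -> z \in S -> z != v0 ->
  priv S v0 (c v0 z) -> #|cols S| <= 6.
Proof.
move=> hS hv0 hz hzv hp.
pose s := v0 :: z :: enum (S :\ v0 :\ z).
have us : uniq s.
  rewrite /= !inE !mem_enum !in_setD1 !eqxx enum_uniq /= andbF andbT orbF.
  by rewrite eq_sym hzv.
have hs : size s = 6.
  rewrite /= -cardE; move: (cardsD1 v0 S) (cardsD1 z (S :\ v0)).
  rewrite hv0 in_setD1 hzv hz hS /= => h1 h2. rewrite h2 in h1. by rewrite h1.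
have hSs : S =i s.
  move=> u; rewrite /= !inE mem_enum !in_setD1.
  case: (eqVneq u v0) => [->|h1] /=; first by rewrite hv0.
  by case: (eqVneq u z) => [->|h2] //=; rewrite hz.
apply: (@small_gen S 6 forb6 s v0 us hs hSs _ s6).
move=> i hi; rewrite /forb6 (nth_map (0,0)) //.
have hall : all (fun e => (e.1 < e.2) && (e.2 < 6)) (E 6) by vm_compute.
have : nth (0,0) (E 6) i \in E 6 by apply: mem_nth.
move/(allP hall); case: (nth (0,0) (E 6) i) => a b /= /andP [hab hb6] ha0.
rewrite /=.
have ha6 : a < size s by rewrite hs; lia.
have hb6' : b < size s by rewrite hs.
apply: (neq_priv hp).
- by rewrite hSs mem_nth.
- by rewrite hSs mem_nth.
- by rewrite -[v0]/(nth v0 s 0) nth_uniq.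
- rewrite -[v0]/(nth v0 s 0) nth_uniq //; lia.
- by rewrite nth_uniq // neq_ltn hab.
Qed.

Lemma bound m (S : {set 'I_n}) : #|S| = m -> 5 <= m -> #|cols S| <= maxn m 6.
Proof.
elim: m S => [|m IH] S hS hm; first by [].
have [e5|n5] := eqVneq m 4.
  by subst m; have := small5 hS; lia.
have [e6|n6] := eqVneq m 5.
  subst m; case: (leqP #|cols S| 6) => [h|h]; first by move: h; clear; lia.
  exfalso.
  have [v0 hv0] : exists v0, v0 \in S by apply/card_gt0P; rewrite hS.
  have hS5 : #|S :\ v0| = 5 by move: (cardsD1 v0 S); rewrite hv0 hS /=; lia.
  have h5 := small5 hS5.
  have : 0 < #|cols S :\: cols (S :\ v0)|.
    rewrite cardsD; have := subset_leq_card (subsetIr (cols S) (cols (S :\ v0))); lia.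
  case/card_gt0P => col hcol; have [z [hz hzv e]] := priv_edge hcol.
  have hp : priv S v0 (c v0 z) by rewrite /priv e; case/setDP: hcol.
  have := small6 hS hv0 hz hzv hp; lia.
case: (boolP [exists v in S, #|cols S :\: cols (S :\ v)| <= 1]).
  case/existsP => v /andP [hv h1].
  have hSv : #|S :\ v| = m by move: (cardsD1 v S); rewrite hv hS /=; lia.
  have hIH := IH _ hSv ltac:(move: hm n5; rewrite ltnS; lia).
  have hsub : cols (S :\ v) \subset cols S.
    apply/subsetP => col /colsP [u [u' [hu hu' huu' <-]]].
    by apply: cols_mem => //; [move: hu | move: hu']; rewrite in_setD1 => /andP [].
  have hI : cols S :&: cols (S :\ v) = cols (S :\ v) by apply/setIidPr.
  have := cardsD (cols S) (cols (S :\ v)); rewrite hI.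
  have := subset_leq_card hsub; move: h1 hIH; lia.
move/existsPn => H; exfalso; apply: hnr; apply: (@P2main S); first by rewrite hS.
move=> v hv; have := H v; rewrite hv /= -ltnNge //.
Qed.

End G.

Definition M5 : seq (seq nat) :=
  [:: [:: 0;0;1;0;2]; [:: 0;0;3;2;0]; [:: 1;3;0;4;5]; [:: 0;2;4;0;0]; [:: 2;0;5;0;0]].
Definition tab (u v : nat) := nth 0 (nth [::] M5 u) v.
Definition c5 (u v : 'I_5) : 'I_6 := inord (tab u v).
Definition I5 := iota 0 5.

Lemma tab_lt u v : u < 5 -> v < 5 -> tab u v < 6.
Proof.
have : all (fun u => all (fun v => tab u v < 6) I5) I5 by vm_compute.
move=> /allP H hu hv; have := H u; rewrite mem_iota hu => /(_ isT) /allP /(_ v).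
by rewrite mem_iota hv; apply.
Qed.

Lemma c5_ok : edge_coloring c5 /\ ~ has_rainbow_C3P2 c5.
Proof.
split; first split.
- move=> u v; rewrite /c5; congr inord.
  have : all (fun u => all (fun v => tab u v == tab v u) I5) I5 by vm_compute.
  move=> /allP /(_ u); rewrite mem_iota ltn_ord => /(_ isT) /allP /(_ v).
  by rewrite mem_iota ltn_ord => /(_ isT) /eqP.
- move=> i.
  have : all (fun i => has (fun u => has (fun v => (u != v) && (tab u v == i)) I5) I5) (iota 0 6)
    by vm_compute.
  move=> /allP /(_ i); rewrite mem_iota ltn_ord => /(_ isT) /hasP [u hu /hasP [v hv /andP [huv /eqP e]]].
  move: hu hv; rewrite !mem_iota /= => hu hv.
  exists (inord u), (inord v); split.
    by rewrite -val_eqE /= !inordK.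
  by apply: val_inj; rewrite /c5 /= !inordK // e.
- move=> [a [b [x [d [e [h1 h2]]]]]].
  have : all (fun a => all (fun b => all (fun x => all (fun d => all (fun e =>
     ~~ (uniq [:: a; b; x; d; e] && uniq [:: tab a b; tab b x; tab x a; tab d e])) I5) I5) I5) I5) I5
    by vm_compute.
  have hm (y : 'I_5) : (val y \in I5) by rewrite mem_iota ltn_ord.
  move=> /allP /(_ _ (hm a)) /allP /(_ _ (hm b)) /allP /(_ _ (hm x)) /allP /(_ _ (hm d))
     /allP /(_ _ (hm e)); move/negP; apply; apply/andP; split.
    by rewrite -(map_inj_uniq val_inj) in h1.
  have ht (y z : 'I_5) : tab y z = val (c5 y z) by rewrite /c5 /= inordK // tab_lt.
  by rewrite !ht -(map_inj_uniq val_inj) in h2 *.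
Qed.

Definition star n (o u v : 'I_n) : 'I_n := if u == o then v else if v == o then u else o.

Lemma star_ok n (o u1 u2 : 'I_n) : u1 != o -> u2 != o -> u1 != u2 ->
  edge_coloring (star o) /\ ~ has_rainbow_C3P2 (star o).
Proof.
move=> h1 h2 h12.
have K u v : u != o -> v != o -> star o u v = o by move=> /negbTE hu /negbTE hv; rewrite /star hu hv.
split; first split.
- move=> u v; rewrite /star; case: (eqVneq u o) => [eu|hu]; case: (eqVneq v o) => [ev|hv] //; rewrite ?eu ?ev ?eqxx // ?(negbTE hu) ?(negbTE hv).
- move=> i; case: (eqVneq i o) => [->|hi].
    by exists u1, u2; split => //; rewrite K.
  by exists o, i; split; [rewrite eq_sym | rewrite /star eqxx].
- move=> [a [b [x [d [e [hu hc]]]]]].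
  move: hu; rewrite /= !inE !negb_or => /and5P [/and4P [hab hax had hae] /and3P [hbx hbd hbe]
     /andP [hxd hxe] hde _].
  have fin (p q : 'I_n) : uniq [:: p; o; q; o] || uniq [:: o; o; p; q] || uniq [:: o; p; q; o] || uniq [:: p; q; o; o] || uniq [:: o; p; o; q] -> False.
    by rewrite /= !inE !eqxx /= ?orbT ?andbF ?andFb.
  move: hc; case: (eqVneq d o) => [hdo|hdo].
    subst d; rewrite (K a b) ?(K b x); try dst; move=> h; apply: (fin (star o x a) (star o o e)); by rewrite h ?orbT.
  case: (eqVneq e o) => [heo|heo].
    subst e; rewrite (K a b) ?(K b x); try dst; move=> h; apply: (fin (star o x a) (star o d o)); by rewrite h ?orbT.
  rewrite (K d e) //.
  case: (eqVneq a o) => [hao|hao].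
    subst a; rewrite (K b x); try dst; move=> h; apply: (fin (star o o b) (star o x o)); by rewrite h ?orbT.
  case: (eqVneq b o) => [hbo|hbo].
    subst b; rewrite (K x a); try dst; move=> h; apply: (fin (star o a o) (star o o x)); by rewrite h ?orbT.
  rewrite (K a b); try dst; move=> h; apply: (fin (star o b x) (star o x a)); by rewrite h ?orbT.
Qed.

Unset Implicit Arguments.
Theorem proposition6p2 (n : nat) (hn : 5 <= n) :
  AR_C3P2_is n (maxn n.+1 7).
Proof.
split.
- have [e5|n5] := eqVneq n 5.
    by subst n; exists 6, c5; split; [by [] | exact: c5_ok].
  have h0 : 0 < n by lia.
  have h1 : 1 < n by lia.
  have h2 : 2 < n by lia.
  exists n, (star (Ordinal h0)); split; first by lia.
  by apply: (@star_ok n (Ordinal h0) (Ordinal h1) (Ordinal h2)).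
- move=> k c [hsym hsurj] hnr.
  have hT : cols c setT = setT.
    apply/setP => i; rewrite in_setT; have [u [v [huv <-]]] := hsurj i.
    exact: (cols_mem c (in_setT u) (in_setT v) huv).
  have hn' : #|[set: 'I_n]| = n by rewrite cardsT card_ord.
  have := bound hsym hnr hn' hn; rewrite hT cardsT card_ord; lia.
Qed.
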